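(* Let $T>0$ and $0<\delta<\min\{1,T/2\}$, let $3\delta\le z\le T-3\delta$ and let $f\in C^1([0,T]\setminus\{z\})$. Define $\alpha=\ln(1/\delta^3)/\delta$, $\gamma=\frac{1}{2\sigma(\alpha\delta)}$ with $\sigma=\tanh$, and $\chi_\delta(t)=\gamma\bigl(\sigma(\alpha(t-2\delta))-\sigma(\alpha(t-T+2\delta))\bigr)$. Then $$\Bigl|\int_0^T f(t)\chi_\delta'(t)\,dt-f(2\delta)+f(T-2\delta)\Bigr|\le\Bigl(T\|f\|_{L^\infty([0,T])}+3\ln(1/\delta)\|f'\|_{L^\infty(B)}\Bigr)\frac{4\delta}{1-\delta},$$ where $B=[\delta,3\delta]\cup[T-3\delta,T-\delta]$. *)

(* Defs.v *)
From Stdlib Require Import Reals.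
From Coquelicot Require Import Coquelicot.
Open Scope R_scope.

Definition sigma (x : R) : R := tanh x.

Definition alpha_d (delta : R) : R := ln (1 / delta ^ 3) / delta.
Definition gamma_d (delta : R) : R := 1 / (2 * sigma (alpha_d delta * delta)).

Definition chi (T delta : R) (t : R) : R :=
  gamma_d delta * (sigma (alpha_d delta * (t - 2 * delta))
                   - sigma (alpha_d delta * (t - T + 2 * delta))).

(* Derivative of f at t relative to a set D (one-sided at endpoints of an
   interval): limit of the difference quotient as y -> t, y in D, y <> t. *)
Definition has_deriv_within (D : R -> Prop) (f : R -> R) (t l : R) : Prop :=
  filterlim (fun y => (f y - f t) / (y - t))
            (within (fun y => D y /\ y <> t) (locally t)) (locally l).

Definition C1_on (D : R -> Prop) (f f' : R -> R) : Prop :=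
  (forall t, D t -> has_deriv_within D f t (f' t)) /\
  (forall t, D t -> filterlim f' (within D (locally t)) (locally (f' t))).

Definition punct_interval (T z : R) (t : R) : Prop := 0 <= t <= T /\ t <> z.

Definition setB (T delta : R) (t : R) : Prop :=
  (delta <= t <= 3 * delta) \/ (T - 3 * delta <= t <= T - delta).

(* Main.v *)
Require Import Defs.
From Stdlib Require Import Reals Lra Lia.
From Coquelicot Require Import Coquelicot.
Open Scope R_scope.

Lemma ballR (x e y : R) : ball x e y <-> Rabs (y - x) < e.
Proof. split; intro H; exact H. Qed.

Definition indic (c c' K : R) (t : R) : R :=
  if Rlt_dec c t then if Rlt_dec t c' then K else 0 else 0.

Lemma indic_step (a b c c' K : R) : a <= c -> c <= c' -> c' <= b ->
  adapted_couple (indic c c' K) a b (a :: c :: c' :: b :: nil)%list (0 :: K :: 0 :: nil)%list.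
Proof.
  intros H1 H2 H3. unfold adapted_couple. repeat split.
  - intros i Hi. simpl in Hi. destruct i as [|[|[|i]]]; simpl; try lra; lia.
  - simpl. rewrite Rmin_left; lra.
  - simpl; rewrite Rmax_right; lra.
  - intros i Hi; simpl in Hi. unfold constant_D_eq, open_interval, indic.
    destruct i as [|[|[|i]]]; simpl; intros x Hx; try lia;
    repeat destruct Rlt_dec; lra.
Qed.

Definition indicSF (a b c c' K : R) (H1 : a <= c) (H2 : c <= c') (H3 : c' <= b) : StepFun a b :=
  mkStepFun (existT _ (a :: c :: c' :: b :: nil)%list (existT _ (0 :: K :: 0 :: nil)%list (indic_step a b c c' K H1 H2 H3))).

Lemma indicSF_int a b c c' K H1 H2 H3 : RiemannInt_SF (indicSF a b c c' K H1 H2 H3) = K * (c' - c).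
Proof.
  unfold RiemannInt_SF, indicSF. simpl. destruct Rle_dec; [|lra].
  simpl. ring.
Qed.

Lemma L0 (g : R -> R) (h : R -> R -> R) (a b z K eta0 : R) :
  a <= z - eta0 -> z + eta0 <= b -> 0 < eta0 -> 0 <= K ->
  (forall eta, 0 < eta -> eta <= eta0 -> ex_RInt (h eta) a b) ->
  (forall eta, 0 < eta -> eta <= eta0 -> forall t, a <= t <= b ->
     Rabs (g t - h eta t) <= indic (z - eta) (z + eta) K t) ->
  Riemann_integrable g a b.
Proof.
  intros Ha Hb He0 HK Hint Happ eps.
  set (eta := Rmin eta0 (eps / (4 * (K + 1)))).
  assert (Hep : 0 < eps) by apply cond_pos.
  assert (Heta : 0 < eta).
  { unfold eta. apply Rmin_pos; auto. apply Rdiv_lt_0_compat; lra. }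
  assert (Heta0 : eta <= eta0) by apply Rmin_l.
  assert (Heta1 : eta <= eps / (4 * (K + 1))) by apply Rmin_r.
  assert (Hri := ex_RInt_Reals_0 _ _ _ (Hint eta Heta Heta0)).
  assert (He2 : 0 < eps / 2) by lra.
  destruct (Hri (mkposreal _ He2)) as [phi [psi [Hp1 Hp2]]].
  assert (c1 : a <= z - eta) by lra.
  assert (c2 : z - eta <= z + eta) by lra.
  assert (c3 : z + eta <= b) by lra.
  exists phi.
  exists (mkStepFun (StepFun_P28 1 psi (indicSF a b (z - eta) (z + eta) K c1 c2 c3))).
  split.
  - intros t Ht. simpl.
    assert (Hab : a <= b) by lra.
    rewrite Rmin_left in Ht by lra. rewrite Rmax_right in Ht by lra.
    specialize (Hp1 t). rewrite Rmin_left in Hp1 by lra. rewrite Rmax_right in Hp1 by lra.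
    specialize (Hp1 Ht).
    specialize (Happ eta Heta Heta0 t Ht).
    replace (g t - phi t) with ((g t - h eta t) + (h eta t - phi t)) by ring.
    eapply Rle_trans. apply Rabs_triang. lra.
  - rewrite StepFun_P30. rewrite indicSF_int. simpl in Hp2.
    assert (K * (z + eta - (z - eta)) <= eps / 2 * (K / (K + 1))).
    { replace (K * (z + eta - (z - eta))) with (2 * K * eta) by ring.
      apply Rle_trans with (2 * K * (eps / (4 * (K + 1)))).
      apply Rmult_le_compat_l; lra.
      right. field. lra. }
    assert (K / (K + 1) < 1).
    { apply Rmult_lt_reg_r with (K + 1). lra. field_simplify; lra. }
    assert (0 <= K * (z + eta - (z - eta))) by (apply Rmult_le_pos; lra).
    eapply Rle_lt_trans. apply Rabs_triang.
    rewrite Rmult_1_l. rewrite (Rabs_right (K * _)) by lra.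
    assert (eps / 2 * (K / (K + 1)) < eps / 2 * 1) by (apply Rmult_lt_compat_l; lra).
    lra.
Qed.

Definition clamp (a b x : R) := Rmax a (Rmin b x).

Lemma clamp_in a b x : a <= b -> a <= clamp a b x <= b.
Proof. intros; unfold clamp, Rmax, Rmin; repeat destruct Rle_dec; lra. Qed.

Lemma clamp_id a b x : a <= x <= b -> clamp a b x = x.
Proof. intros; unfold clamp, Rmax, Rmin; repeat destruct Rle_dec; lra. Qed.

Lemma clamp_lip a b x y : a <= b -> Rabs (clamp a b y - clamp a b x) <= Rabs (y - x).
Proof.
  intros; unfold clamp, Rmax, Rmin; repeat destruct Rle_dec;
  unfold Rabs; repeat destruct Rcase_abs; lra.
Qed.

Lemma deriv_within_cont D f t l : D t -> has_deriv_within D f t l ->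
  filterlim f (within D (locally t)) (locally (f t)).
Proof.
  intros Dt H. unfold has_deriv_within in H.
  intros P [eps HP].
  assert (H1 : locally l (fun q => Rabs (q - l) < 1)).
  { exists (mkposreal 1 Rlt_0_1). intros y Hy. apply ballR in Hy. exact Hy. }
  specialize (H _ H1). destruct H as [d Hd].
  assert (Hl : 0 < Rabs l + 1) by (generalize (Rabs_pos l); lra).
  assert (Hd' : 0 < Rmin d (eps / (Rabs l + 1))).
  { apply Rmin_pos. apply cond_pos. apply Rdiv_lt_0_compat. apply cond_pos. lra. }
  exists (mkposreal _ Hd'). intros y Hy Dy. simpl in Hy. apply ballR in Hy.
  apply HP. apply ballR.
  destruct (Req_dec y t) as [->|Hne].
  - replace (f t - f t) with 0 by ring. rewrite Rabs_R0. apply cond_pos.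
  - assert (Hy1 : ball t d y). { apply ballR. eapply Rlt_le_trans. exact Hy. apply Rmin_l. }
    specialize (Hd y Hy1 (conj Dy Hne)). simpl in Hd.
    replace (f y - f t) with ((f y - f t) / (y - t) * (y - t)) by (field; lra).
    rewrite Rabs_mult.
    assert (Rabs ((f y - f t) / (y - t)) < Rabs l + 1).
    { replace ((f y - f t) / (y - t)) with (((f y - f t) / (y - t) - l) + l) by ring.
      eapply Rle_lt_trans. apply Rabs_triang. lra. }
    assert (Rabs (y - t) < eps / (Rabs l + 1)) by (eapply Rlt_le_trans; [exact Hy| apply Rmin_r]).
    apply Rle_lt_trans with ((Rabs l + 1) * Rabs (y - t)).
    apply Rmult_le_compat_r. apply Rabs_pos. lra.
    apply Rmult_lt_reg_l with (/ (Rabs l + 1)). apply Rinv_0_lt_compat; lra.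
    replace (/ (Rabs l + 1) * ((Rabs l + 1) * Rabs (y - t))) with (Rabs (y - t)) by (field; lra).
    replace (/ (Rabs l + 1) * eps) with (eps / (Rabs l + 1)) by (field; lra). exact H0.
Qed.

Lemma mult_within (D : R -> Prop) (f g : R -> R) (t : R) : filterlim f (within D (locally t)) (locally (f t)) ->
  filterlim g (locally t) (locally (g t)) ->
  filterlim (fun x => f x * g x) (within D (locally t)) (locally (f t * g t)).
Proof.
  intros Hf Hg.
  apply (filterlim_comp_2 (G:=locally (f t)) (H:=locally (g t)) f g Rmult Hf).
  - eapply filterlim_filter_le_1. apply filter_le_within. exact Hg.
  - apply (filterlim_scal (K:=R_AbsRing) (V:=R_NormedModule) (f t) (g t)).
Qed.

Lemma int_D (D : R -> Prop) (g : R -> R) (a b : R) : a <= b -> (forall t, a <= t <= b -> D t) ->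
  (forall t, D t -> filterlim g (within D (locally t)) (locally (g t))) ->
  ex_RInt g a b.
Proof.
  intros Hab HD Hg.
  apply ex_RInt_ext with (fun x => g (clamp a b x)).
  { intros x Hx. rewrite Rmin_left in Hx by lra. rewrite Rmax_right in Hx by lra.
    rewrite clamp_id; auto; lra. }
  apply (ex_RInt_continuous (V:=R_CompleteNormedModule)). intros x _.
  unfold continuous.
  apply filterlim_comp with (within D (locally (clamp a b x))).
  - intros P [e HP]. exists e. intros y Hy. apply HP.
    apply ballR. apply ballR in Hy. eapply Rle_lt_trans. apply clamp_lip; auto. exact Hy.
    apply HD. apply clamp_in; auto.
  - apply Hg. apply HD. apply clamp_in; auto.
Qed.

Lemma intD_full (T z K : R) (g : R -> R) : 0 < z < T -> 0 <= K ->
  (forall t, punct_interval T z t -> filterlim g (within (punct_interval T z) (locally t)) (locally (g t))) ->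
  (forall t, 0 <= t <= T -> Rabs (g t) <= K) ->
  ex_RInt g 0 T.
Proof.
  intros Hz HK Hg HgK.
  apply ex_RInt_Reals_1.
  set (eta0 := Rmin z (T - z) / 2).
  assert (Heta0 : 0 < eta0). { unfold eta0. apply Rmin_case; lra. }
  assert (E1 : eta0 <= z / 2). { unfold eta0. generalize (Rmin_l z (T - z)); lra. }
  assert (E2 : eta0 <= (T - z) / 2). { unfold eta0. generalize (Rmin_r z (T - z)); lra. }
  apply (L0 g (fun eta t => if Rlt_dec (z - eta) t then if Rlt_dec t (z + eta) then 0 else g t else g t)
     0 T z K eta0); try lra.
  - intros eta He He0.
    apply ex_RInt_Chasles with (z - eta).
    { apply ex_RInt_ext with g.
      { intros x Hx. rewrite Rmin_left in Hx by lra. rewrite Rmax_right in Hx by lra.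
        destruct Rlt_dec; [lra | reflexivity]. }
      apply int_D with (punct_interval T z); auto; try lra.
      intros t Ht; split; lra. }
    apply ex_RInt_Chasles with (z + eta).
    { apply ex_RInt_ext with (fun _ => 0).
      { intros x Hx. rewrite Rmin_left in Hx by lra. rewrite Rmax_right in Hx by lra.
        destruct Rlt_dec; [|lra]. destruct Rlt_dec; [reflexivity|lra]. }
      apply ex_RInt_const. }
    { apply ex_RInt_ext with g.
      { intros x Hx. rewrite Rmin_left in Hx by lra. rewrite Rmax_right in Hx by lra.
        destruct Rlt_dec; [|lra]. destruct Rlt_dec; [lra|reflexivity]. }
      apply int_D with (punct_interval T z); auto; try lra.
      intros t Ht; split; lra. }
  - intros eta He He0 t Ht. unfold indic.
    destruct Rlt_dec; [destruct Rlt_dec|].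
    + rewrite Rminus_0_r. apply HgK; auto.
    + rewrite Rminus_diag, Rabs_R0; lra.
    + rewrite Rminus_diag, Rabs_R0; lra.
Qed.

Definition dth (u : R) := 4 / (exp u + exp (- u)) ^ 2.

Lemma exp_sum_pos u : 0 < exp u + exp (- u).
Proof. generalize (exp_pos u) (exp_pos (- u)); lra. Qed.

Lemma is_derive_tanh u : is_derive tanh u (dth u).
Proof.
  unfold tanh, sinh, cosh, dth. generalize (exp_sum_pos u); intro H.
  auto_derive. lra. rewrite exp_Ropp in *. generalize (exp_pos u); intro He.
  assert (exp u * exp u + 1 <> 0) by nra.
  field. split. lra. intro E. apply H0. field_simplify in E. nra.
Qed.

Definition Sp (a g p t : R) := g * tanh (a * (t - p)).
Definition Sp' (a g p t : R) := g * (a * dth (a * (t - p))).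

Lemma is_derive_Sp a g p t : is_derive (Sp a g p) t (Sp' a g p t).
Proof.
  unfold Sp, Sp'.
  apply (is_derive_scal (fun t => tanh (a * (t - p)))).
  apply (is_derive_comp tanh (fun t => a * (t - p))).
  apply is_derive_tanh.
  auto_derive. auto. ring.
Qed.

Lemma Sp'_cont a g p t : continuous (Sp' a g p) t.
Proof.
  apply (ex_derive_continuous (K:=R_AbsRing) (V:=R_NormedModule)). unfold Sp', dth.
  generalize (exp_sum_pos (a * (t - p))); intro H.
  auto_derive. replace (t + - p) with (t - p) by ring. rewrite Rmult_1_r. apply Rmult_integral_contrapositive; split; lra.
Qed.

Lemma dth_pos u : 0 < dth u.
Proof. unfold dth. apply Rdiv_lt_0_compat. lra. apply pow_lt, exp_sum_pos. Qed.

Lemma dth_le1 u : dth u <= 1.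
Proof.
  unfold dth. generalize (exp_ineq1_le u) (exp_ineq1_le (- u)) (exp_sum_pos u); intros H1 H2 H3.
  apply Rmult_le_reg_r with ((exp u + exp (- u)) ^ 2). apply pow_lt; lra.
  field_simplify; try lra. nra.
Qed.

Lemma tanh_lt1 x : tanh x < 1.
Proof.
  unfold tanh, sinh, cosh. generalize (exp_pos x) (exp_pos (- x)); intros.
  apply Rmult_lt_reg_r with ((exp x + exp (- x)) / 2). lra.
  field_simplify; lra.
Qed.

Lemma tanh_gtm1 x : -1 < tanh x.
Proof.
  unfold tanh, sinh, cosh. generalize (exp_pos x) (exp_pos (- x)); intros.
  apply Rmult_lt_reg_r with ((exp x + exp (- x)) / 2). lra.
  field_simplify; lra.
Qed.

Lemma tanh_odd x : tanh (- x) = - tanh x.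
Proof.
  unfold tanh, sinh, cosh. rewrite Ropp_involutive.
  generalize (exp_pos x) (exp_pos (- x)); intros. field. lra.
Qed.

Lemma tanh_pos x : 0 < x -> 0 < tanh x.
Proof.
  intro Hx. unfold tanh, sinh, cosh. generalize (exp_pos x) (exp_pos (- x)); intros.
  assert (exp (- x) < exp x) by (apply exp_increasing; lra).
  apply Rdiv_lt_0_compat; lra.
Qed.

Lemma Rabs_le_inv (x a : R) : Rabs x <= a -> - a <= x <= a.
Proof. unfold Rabs; destruct Rcase_abs; intros; lra. Qed.

Lemma deriv_interior (D : R -> Prop) (f : R -> R) (x l u v : R) : u < x < v ->
  (forall y, u < y < v -> D y) -> has_deriv_within D f x l -> is_derive f x l.
Proof.
  intros Hx HD H. apply is_derive_Reals. intros eps Heps.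
  assert (H1 : locally l (fun q => Rabs (q - l) < eps)).
  { exists (mkposreal eps Heps). intros y Hy. apply ballR in Hy. exact Hy. }
  specialize (H _ H1). destruct H as [d Hd].
  assert (Hp : 0 < Rmin d (Rmin (x - u) (v - x))).
  { apply Rmin_pos. apply cond_pos. apply Rmin_pos; lra. }
  exists (mkposreal _ Hp). intros h Hh0 Hh. simpl in Hh.
  assert (h1 : Rabs h < d) by (eapply Rlt_le_trans; [exact Hh| apply Rmin_l]).
  assert (h2 : Rabs h < Rmin (x - u) (v - x)) by (eapply Rlt_le_trans; [exact Hh| apply Rmin_r]).
  assert (h3 : Rabs h < x - u) by (eapply Rlt_le_trans; [exact h2| apply Rmin_l]).
  assert (h4 : Rabs h < v - x) by (eapply Rlt_le_trans; [exact h2| apply Rmin_r]).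
  assert (h5 : - Rabs h <= h <= Rabs h) by (apply Rabs_le_inv; lra).
  specialize (Hd (x + h)).
  assert (Hb : ball x d (x + h)) by (apply ballR; replace (x + h - x) with h by ring; exact h1).
  specialize (Hd Hb). simpl in Hd.
  assert (HDy : D (x + h) /\ x + h <> x) by (split; [apply HD; lra | lra]).
  specialize (Hd HDy). replace (x + h - x) with h in Hd by ring. exact Hd.
Qed.

Lemma RInt_abs_bound (h G : R -> R) u v : u <= v -> ex_RInt h u v -> ex_RInt G u v ->
  (forall x, u < x < v -> Rabs (h x) <= G x) -> Rabs (RInt h u v) <= RInt G u v.
Proof.
  intros Huv Hh HG Hb. apply Rabs_le; split.
  - assert (E : RInt (fun x => - G x) u v = - RInt G u v).
    { apply (RInt_opp (V:=R_CompleteNormedModule)). exact HG. }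
    rewrite <- E. apply RInt_le; auto.
    apply (ex_RInt_opp (V:=R_NormedModule)). exact HG.
    intros x Hx. specialize (Hb x Hx). apply Rabs_le_inv in Hb. lra.
  - apply RInt_le; auto. intros x Hx. specialize (Hb x Hx). apply Rabs_le_inv in Hb. lra.
Qed.

Lemma cSp'_cont c a g p t : continuous (fun t => c * Sp' a g p t) t.
Proof.
  apply (ex_derive_continuous (K:=R_AbsRing) (V:=R_NormedModule)). unfold Sp', dth.
  generalize (exp_sum_pos (a * (t - p))); intro H.
  auto_derive. replace (t + - p) with (t - p) by ring. rewrite Rmult_1_r.
  apply Rmult_integral_contrapositive; split; lra.
Qed.

Lemma IS c a g p u v : is_RInt (fun t => c * Sp' a g p t) u v (c * (Sp a g p v - Sp a g p u)).
Proof.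
  replace (c * (Sp a g p v - Sp a g p u)) with (minus (c * Sp a g p v) (c * Sp a g p u)).
  2:{ unfold minus, plus, opp; simpl. ring. }
  apply (is_RInt_derive (V:=R_CompleteNormedModule) (fun t => c * Sp a g p t)).
  - intros x _. apply (is_derive_scal (fun t => Sp a g p t)). apply is_derive_Sp.
  - intros x _. apply cSp'_cont.
Qed.

Lemma tail0 (f : R -> R) M1 a g p u v : u <= v -> 0 <= g -> 0 <= a ->
  ex_RInt (fun t => f t * Sp' a g p t) u v ->
  (forall x, u < x < v -> Rabs (f x) <= M1) ->
  Rabs (RInt (fun t => f t * Sp' a g p t) u v) <= M1 * (Sp a g p v - Sp a g p u).
Proof.
  intros Huv Hg Ha HF Hb.
  rewrite <- (is_RInt_unique _ _ _ _ (IS M1 a g p u v)).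
  apply RInt_abs_bound; auto.
  - eexists. apply IS.
  - intros x Hx. assert (HS : 0 <= Sp' a g p x).
    { unfold Sp'. generalize (dth_pos (a * (x - p))); intro.
      apply Rmult_le_pos; auto. apply Rmult_le_pos; lra. }
    rewrite Rabs_mult, (Rabs_pos_eq _ HS). apply Rmult_le_compat_r; auto.
Qed.

Lemma tail (T z : R) (f : R -> R) M1 a g p u v : 0 <= u -> u <= v -> v <= T -> 0 <= g -> 0 <= a ->
  (forall u v, 0 <= u -> u <= v -> v <= T -> ex_RInt (fun t => f t * Sp' a g p t) u v) ->
  (forall t, punct_interval T z t -> Rabs (f t) <= M1) ->
  Rabs (RInt (fun t => f t * Sp' a g p t) u v) <= M1 * (Sp a g p v - Sp a g p u).
Proof.
  intros Hu Huv Hv Hg Ha HF Hb.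
  destruct (Rlt_dec u z) as [H1|H1]; [destruct (Rlt_dec z v) as [H2|H2]|].
  - rewrite <- (RInt_Chasles _ u z v) by (apply HF; lra).
    replace (M1 * (Sp a g p v - Sp a g p u)) with
      (M1 * (Sp a g p z - Sp a g p u) + M1 * (Sp a g p v - Sp a g p z)) by ring.
    eapply Rle_trans. apply Rabs_triang. apply Rplus_le_compat.
    + apply tail0; auto; try lra. apply HF; lra. intros x Hx; apply Hb; split; lra.
    + apply tail0; auto; try lra. apply HF; lra. intros x Hx; apply Hb; split; lra.
  - apply tail0; auto. intros x Hx; apply Hb; split; lra.
  - apply tail0; auto. intros x Hx; apply Hb; split; lra.
Qed.

Lemma middle (f : R -> R) a g p d M : 0 < d -> 0 <= g -> 0 <= a ->
  Sp a g p (p + d) - Sp a g p (p - d) = 1 ->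
  ex_RInt (fun t => f t * Sp' a g p t) (p - d) (p + d) ->
  (forall x, p - d < x < p + d -> Rabs (f x - f p) <= M * d) ->
  Rabs (RInt (fun t => f t * Sp' a g p t) (p - d) (p + d) - f p) <= M * d.
Proof.
  intros Hd Hg Ha H1 HF Hb.
  assert (E1 : RInt (fun t => f p * Sp' a g p t) (p - d) (p + d) = f p).
  { rewrite (is_RInt_unique _ _ _ _ (IS (f p) a g p (p - d) (p + d))). rewrite H1. apply Rmult_1_r. }
  assert (Hex2 : ex_RInt (fun t => f p * Sp' a g p t) (p - d) (p + d)) by (eexists; apply IS).
  assert (Hex : ex_RInt (fun t => (f t - f p) * Sp' a g p t) (p - d) (p + d)).
  { apply ex_RInt_ext with (fun t => minus (f t * Sp' a g p t) (f p * Sp' a g p t)).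
    intros; unfold minus, plus, opp; simpl; ring.
    apply (ex_RInt_minus (V:=R_NormedModule)); auto. }
  assert (E : RInt (fun t => (f t - f p) * Sp' a g p t) (p - d) (p + d)
              = RInt (fun t => f t * Sp' a g p t) (p - d) (p + d) - f p).
  { rewrite (RInt_ext _ (fun t => minus (f t * Sp' a g p t) (f p * Sp' a g p t))).
    2: { intros; unfold minus, plus, opp; simpl; ring. }
    rewrite (RInt_minus (V:=R_CompleteNormedModule)); auto.
    rewrite E1. reflexivity. }
  rewrite <- E.
  apply Rle_trans with ((M * d) * (Sp a g p (p + d) - Sp a g p (p - d))).
  2: { rewrite H1; lra. }
  rewrite <- (is_RInt_unique _ _ _ _ (IS (M * d) a g p (p - d) (p + d))).
  apply RInt_abs_bound; auto; try lra.
  - eexists; apply IS.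
  - intros x Hx. assert (HS : 0 <= Sp' a g p x).
    { unfold Sp'. generalize (dth_pos (a * (x - p))); intro.
      apply Rmult_le_pos; auto. apply Rmult_le_pos; lra. }
    rewrite Rabs_mult, (Rabs_pos_eq _ HS). apply Rmult_le_compat_r; auto.
Qed.

Lemma near (D : R -> Prop) (f f' : R -> R) p d M2 :
  (forall y, p - d < y < p + d -> D y) ->
  (forall y, D y -> has_deriv_within D f y (f' y)) ->
  (forall y, p - d < y < p + d -> Rabs (f' y) <= M2) ->
  forall x, p - d < x < p + d -> Rabs (f x - f p) <= M2 * d.
Proof.
  intros HD Hder HM x Hx.
  assert (Hd : forall y, p - d < y < p + d -> is_derive f y (f' y)).
  { intros y Hy. apply deriv_interior with D (p - d) (p + d); auto. }
  assert (Hm1 : p - d < Rmin p x) by (unfold Rmin; destruct Rle_dec; lra).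
  assert (Hm2 : Rmax p x < p + d) by (unfold Rmax; destruct Rle_dec; lra).
  destruct (MVT_gen f p x f') as [c [Hc Hfc]].
  - intros y Hy. apply Hd. lra.
  - intros y Hy. apply continuity_pt_filterlim.
    apply (ex_derive_continuous (K:=R_AbsRing) (V:=R_NormedModule)).
    exists (f' y). apply Hd. lra.
  - replace (f x - f p) with (f' c * (x - p)) by lra.
    rewrite Rabs_mult.
    assert (Rabs (x - p) <= d) by (apply Rabs_le; lra).
    apply Rmult_le_compat; try apply Rabs_pos; auto. apply HM; lra.
Qed.

Lemma bump (T z d : R) (f f' : R -> R) (M1 M2 a g p : R) :
  0 < d -> 0 <= p - d -> p + d <= T -> 0 < a -> 0 < g -> 2 * g * tanh (a * d) = 1 ->
  0 <= M1 ->
  (z <= p - d \/ p + d <= z) ->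
  (forall y, punct_interval T z y -> has_deriv_within (punct_interval T z) f y (f' y)) ->
  (forall t, punct_interval T z t -> Rabs (f t) <= M1) ->
  (forall y, p - d < y < p + d -> Rabs (f' y) <= M2) ->
  (forall u v, 0 <= u -> u <= v -> v <= T -> ex_RInt (fun t => f t * Sp' a g p t) u v) ->
  Rabs (RInt (fun t => f t * Sp' a g p t) 0 T - f p) <= M1 * (2 * g * (1 - tanh (a * d))) + M2 * d.
Proof.
  intros Hd Hp1 Hp2 Ha Hg Hgt HM1 Hz Hder HB1 HB2 HF.
  set (F := fun t => f t * Sp' a g p t).
  rewrite <- (RInt_Chasles F 0 (p - d) T) by (apply HF; lra).
  rewrite <- (RInt_Chasles F (p - d) (p + d) T) by (apply HF; lra).
  assert (Hmid : Rabs (RInt F (p - d) (p + d) - f p) <= M2 * d).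
  { apply middle; try lra.
    - unfold Sp. replace (a * (p + d - p)) with (a * d) by ring.
      replace (a * (p - d - p)) with (- (a * d)) by ring. rewrite tanh_odd. lra.
    - apply HF; lra.
    - apply near with (punct_interval T z) f'; auto.
      intros y Hy; split; lra. }
  assert (HA : Rabs (RInt F 0 (p - d)) <= M1 * (g * (1 - tanh (a * d)))).
  { eapply Rle_trans. apply (tail T z); auto; try lra.
    apply Rmult_le_compat_l; auto. unfold Sp.
    replace (a * (p - d - p)) with (- (a * d)) by ring. rewrite tanh_odd.
    generalize (tanh_gtm1 (a * (0 - p))); intro. nra. }
  assert (HC : Rabs (RInt F (p + d) T) <= M1 * (g * (1 - tanh (a * d)))).
  { eapply Rle_trans. apply (tail T z); auto; try lra.
    apply Rmult_le_compat_l; auto. unfold Sp.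
    replace (a * (p + d - p)) with (a * d) by ring.
    generalize (tanh_lt1 (a * (T - p))); intro. nra. }
  change plus with Rplus.
  replace (RInt F 0 (p - d) + (RInt F (p - d) (p + d) + RInt F (p + d) T) - f p)
    with (RInt F 0 (p - d) + (RInt F (p - d) (p + d) - f p) + RInt F (p + d) T) by ring.
  eapply Rle_trans. apply Rabs_triang.
  eapply Rle_trans. apply Rplus_le_compat_r. apply Rabs_triang.
  lra.
Qed.

Lemma powlt1 (x : R) (n : nat) : 0 <= x < 1 -> x ^ S n < 1.
Proof.
  intros Hx. induction n. simpl; lra.
  change (x ^ S (S n)) with (x * x ^ S n).
  assert (0 <= x ^ S n) by (apply pow_le; lra). nra.
Qed.

Lemma frac_le a b c d : 0 < b -> 0 < d -> a * d <= c * b -> a / b <= c / d.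
Proof.
  intros Hb Hd H.
  replace (a / b) with ((a * d) * / (b * d)) by (field; lra).
  replace (c / d) with ((c * b) * / (b * d)) by (field; lra).
  apply Rmult_le_compat_r. left; apply Rinv_0_lt_compat; nra. exact H.
Qed.

Lemma ln_bound (d : R) : 0 < d -> 1 - d <= ln (1 / d).
Proof.
  intro Hd. replace (1 / d) with (/ d) by (field; lra). rewrite ln_Rinv by lra.
  generalize (exp_ineq1_le (ln d)); rewrite exp_ln by lra. lra.
Qed.

Theorem lemmaA3 (T delta z : R) (f f' : R -> R) (M1 M2 : R) :
  0 < T ->
  0 < delta -> delta < Rmin 1 (T / 2) ->
  3 * delta <= z <= T - 3 * delta ->
  C1_on (punct_interval T z) f f' ->
  (* M1 bounds ||f||_{L^oo([0,T])} (values off the null set {z}) *)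
  (forall t, punct_interval T z t -> Rabs (f t) <= M1) ->
  (* M2 bounds ||f'||_{L^oo(B)} (values off the null set {z}) *)
  (forall t, setB T delta t -> t <> z -> Rabs (f' t) <= M2) ->
  Rabs (RInt (fun t => f t * Derive (chi T delta) t) 0 T
        - f (2 * delta) + f (T - 2 * delta))
  <= (T * M1 + 3 * ln (1 / delta) * M2) * (4 * delta / (1 - delta)).
Proof.
  intros HT Hd Hdm Hz [HC1 HC2] HM1 HM2.
  assert (Hd1 : delta < 1) by (eapply Rlt_le_trans; [exact Hdm | apply Rmin_l]).
  set (a := alpha_d delta). set (g := gamma_d delta).
  set (X := ln (1 / delta ^ 3)).
  assert (Hd3 : 0 < delta ^ 3) by (apply pow_lt; lra).
  assert (Hd6 : 0 < delta ^ 6) by (apply pow_lt; lra).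
  assert (Hd6' : delta ^ 6 < 1) by (apply (powlt1 delta 5); lra).
  assert (Hd3' : delta ^ 3 < 1) by (apply (powlt1 delta 2); lra).
  assert (HX : 0 < X).
  { unfold X. rewrite <- ln_1. apply ln_increasing. lra.
    apply Rmult_lt_reg_r with (delta ^ 3); auto. field_simplify; lra. }
  assert (HaX : a * delta = X) by (unfold a, alpha_d, X; field; lra).
  assert (Ha : 0 < a) by (unfold a, alpha_d; apply Rdiv_lt_0_compat; auto).
  assert (Htanh : tanh X = (1 - delta ^ 6) / (1 + delta ^ 6)).
  { unfold tanh, sinh, cosh. rewrite exp_Ropp. unfold X. rewrite exp_ln.
    2: { apply Rdiv_lt_0_compat; lra. }
    field. split; lra. }
  assert (HtX : 0 < tanh X) by (apply tanh_pos; auto).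
  assert (Hg : 0 < g) by (unfold g, gamma_d, Defs.sigma; fold a; rewrite HaX; apply Rdiv_lt_0_compat; lra).
  assert (Hgt : 2 * g * tanh (a * delta) = 1).
  { unfold g, gamma_d, Defs.sigma. fold a. rewrite HaX. field. lra. }
  assert (HM1p : 0 <= M1).
  { eapply Rle_trans. apply Rabs_pos. apply (HM1 0). unfold punct_interval; split; [split; lra | intro E; lra]. }
  assert (HM2p : 0 <= M2).
  { eapply Rle_trans. apply Rabs_pos. apply (HM2 (2 * delta)). left; split; lra. intro E; lra. }
  assert (HD : forall t, Derive (chi T delta) t = Sp' a g (2 * delta) t - Sp' a g (T - 2 * delta) t).
  { intro t. apply is_derive_unique.
    apply is_derive_ext with (fun t => minus (Sp a g (2 * delta) t) (Sp a g (T - 2 * delta) t)).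
    { intro s. unfold chi, Sp, Defs.sigma, minus, plus, opp; simpl. fold a g.
      replace (s - T + 2 * delta) with (s - (T - 2 * delta)) by ring. ring. }
    apply (is_derive_minus (fun t => Sp a g (2 * delta) t) (fun t => Sp a g (T - 2 * delta) t));
      apply is_derive_Sp. }
  assert (Hfb : forall t, 0 <= t <= T -> Rabs (f t) <= Rabs (f z) + M1).
  { intros t Ht. destruct (Req_dec t z) as [->|Hne].
    - generalize (Rabs_pos (f z)); lra.
    - generalize (Rabs_pos (f z)) (HM1 t (conj Ht Hne)); lra. }
  assert (Hint : forall p u v, 0 <= u -> u <= v -> v <= T ->
             ex_RInt (fun t => f t * Sp' a g p t) u v).
  { intros p u v Hu Huv Hv.
    assert (H0T : ex_RInt (fun t => f t * Sp' a g p t) 0 T).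
    { apply intD_full with z ((Rabs (f z) + M1) * (g * a)).
      - lra.
      - apply Rmult_le_pos. generalize (Rabs_pos (f z)); lra. nra.
      - intros t Ht. apply mult_within.
        + apply deriv_within_cont with (f' t); auto.
        + apply Sp'_cont.
      - intros t Ht. rewrite Rabs_mult. apply Rmult_le_compat; try apply Rabs_pos; auto.
        unfold Sp'. generalize (dth_pos (a * (t - p))) (dth_le1 (a * (t - p))); intros.
        rewrite Rabs_pos_eq. 2: { apply Rmult_le_pos; [lra|]. apply Rmult_le_pos; lra. }
        apply Rmult_le_compat_l; [lra|].
        apply Rle_trans with (a * 1); [apply Rmult_le_compat_l; lra | lra]. }
    apply (ex_RInt_Chasles_1 (V:=R_CompleteNormedModule)) with T. lra.
    apply (ex_RInt_Chasles_2 (V:=R_CompleteNormedModule)) with 0. lra. exact H0T. }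
  rewrite (RInt_ext _ (fun t => minus (f t * Sp' a g (2 * delta) t) (f t * Sp' a g (T - 2 * delta) t))).
  2: { intros x _. rewrite HD. unfold minus, plus, opp; simpl. ring. }
  rewrite (RInt_minus (V:=R_CompleteNormedModule)) by (apply Hint; lra).
  assert (B1 := bump T z delta f f' M1 M2 a g (2 * delta)).
  assert (B2 := bump T z delta f f' M1 M2 a g (T - 2 * delta)).
  rewrite HaX in B1, B2. rewrite HaX in Hgt.
  assert (E : 2 * g * (1 - tanh X) = 2 * delta ^ 6 / (1 - delta ^ 6)).
  { replace (2 * g * (1 - tanh X)) with (2 * g * tanh X * ((1 - tanh X) / tanh X)) by (field; lra).
    rewrite Hgt, Htanh. field. split; lra. }
  rewrite E in B1, B2.
  specialize (B1 Hd ltac:(lra) ltac:(lra) Ha Hg Hgt HM1p ltac:(lra)).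
  specialize (B2 Hd ltac:(lra) ltac:(lra) Ha Hg Hgt HM1p ltac:(lra)).
  specialize (B1 HC1 HM1). specialize (B2 HC1 HM1).
  specialize (B1 ltac:(intros y Hy; apply HM2; [left; split; lra | intro E0; lra]) (Hint _)).
  specialize (B2 ltac:(intros y Hy; apply HM2; [right; split; lra | intro E0; lra]) (Hint _)).
  unfold minus, plus, opp; simpl.
  match goal with |- Rabs (?I1 + - ?I2 - ?A + ?B) <= _ =>
    replace (I1 + - I2 - A + B) with ((I1 - A) - (I2 - B)) by ring end.
  eapply Rle_trans. apply Rabs_triang. rewrite Rabs_Ropp.
  eapply Rle_trans. apply Rplus_le_compat; [exact B1 | exact B2].
  assert (HL := ln_bound delta Hd).
  set (L := ln (1 / delta)) in *.
  assert (P1 : 2 * delta ^ 6 / (1 - delta ^ 6) <= 2 * T * delta / (1 - delta)).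
  { apply frac_le; try lra.
    assert (delta ^ 6 <= delta ^ 2).
    { replace (delta ^ 6) with (delta ^ 2 * delta ^ 4) by ring.
      assert (delta ^ 4 < 1) by (apply (powlt1 delta 3); lra).
      assert (0 < delta ^ 2) by (apply pow_lt; lra). nra. }
    assert (0 < delta ^ 2) by (apply pow_lt; lra).
    assert (T >= 6 * delta) by lra.
    assert (delta ^ 2 <= delta) by (simpl; nra).
    assert (S1 : 2 * delta ^ 6 * (1 - delta) <= 2 * delta ^ 2 * (1 - delta)) by nra.
    assert (S2 : 2 * delta ^ 2 * (1 - delta) <= 2 * delta ^ 2 * (1 - delta ^ 6)) by nra.
    assert (S3 : 2 * delta ^ 2 * (1 - delta ^ 6) <= 2 * T * delta * (1 - delta ^ 6)).
    { apply Rmult_le_compat_r; [lra|]. simpl. nra. }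
    lra. }
  assert (P2 : delta <= 6 * L * delta / (1 - delta)).
  { replace delta with (delta / 1) at 1 by field. apply frac_le; try lra. nra. }
  replace ((T * M1 + 3 * L * M2) * (4 * delta / (1 - delta))) with
    (2 * (M1 * (2 * T * delta / (1 - delta))) + 2 * (M2 * (6 * L * delta / (1 - delta)))) by (field; lra).
  assert (M1 * (2 * delta ^ 6 / (1 - delta ^ 6)) <= M1 * (2 * T * delta / (1 - delta)))
    by (apply Rmult_le_compat_l; auto).
  assert (M2 * delta <= M2 * (6 * L * delta / (1 - delta))) by (apply Rmult_le_compat_l; auto).
  lra.
Qed.
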